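(* Let $x,y\ge 1$. The maximum number of edges of a connected minimal $(x,y)$ task-dependency graph of order $n$ is $\max(x,y)$ if $n=x+y$ (in which case $\min(x,y)=1$), and $2n-x-y-2$ if $n>x+y$.
   Context: A task-dependency graph is a finite directed acyclic graph (no loops, no multiple edges). A vertex is initial if it has in-degree $0$ and terminal if it has out-degree $0$; an isolated vertex counts as both. An $(x,y)$ task-dependency graph has exactly $x$ initial and exactly $y$ terminal vertices. A minimal $(x,y)$ task-dependency graph is an $(x,y)$ task-dependency graph from which removing any single edge produces a graph that is not an $(x,y)$ task-dependency graph. A connected minimal $(x,y)$ task-dependency graph is a minimal $(x,y)$ task-dependency graph whose underlying undirected graph is connected. The order is the number of vertices. *)

(* Defs.v *)
From mathcomp Require Import all_boot.
Set Implicit Arguments. Unset Strict Implicit. Unset Printing Implicit Defensive.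

(* A finite directed graph of order n: vertex set 'I_n, edge set D of ordered
   pairs (u,v) meaning an edge u -> v.  Using a set excludes multiple edges;
   loops are excluded by acyclicity. *)
Definition digraph (n : nat) := {set 'I_n * 'I_n}.

Definition adj n (D : digraph n) : rel 'I_n := fun u v => (u, v) \in D.

Definition acyclic n (D : digraph n) : bool :=
  [forall u : 'I_n, forall v : 'I_n, adj D u v ==> ~~ connect (adj D) v u].

Definition initial n (D : digraph n) (v : 'I_n) : bool :=
  [forall u : 'I_n, ~~ adj D u v].
Definition terminal n (D : digraph n) (v : 'I_n) : bool :=
  [forall u : 'I_n, ~~ adj D v u].

Definition n_initial n (D : digraph n) : nat := #|[set v | initial D v]|.
Definition n_terminal n (D : digraph n) : nat := #|[set v | terminal D v]|.

Definition tdg n (x y : nat) (D : digraph n) : Prop :=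
  acyclic D /\ n_initial D = x /\ n_terminal D = y.

Definition minimal_tdg n (x y : nat) (D : digraph n) : Prop :=
  tdg x y D /\ forall e, e \in D -> ~ tdg x y (D :\ e).

Definition weakly_connected n (D : digraph n) : Prop :=
  forall u v : 'I_n, connect (fun a b => adj D a b || adj D b a) u v.

Definition conn_minimal_tdg n (x y : nat) (D : digraph n) : Prop :=
  minimal_tdg x y D /\ weakly_connected D.

Definition n_edges n (D : digraph n) : nat := #|D|.

Definition is_max_edges (n x y m : nat) : Prop :=
  (exists D : digraph n, conn_minimal_tdg x y D /\ n_edges D = m) /\
  (forall D : digraph n, conn_minimal_tdg x y D -> n_edges D <= m).

(* Main.v *)
Require Import Defs.
From mathcomp Require Import all_boot zify.
Set Implicit Arguments. Unset Strict Implicit. Unset Printing Implicit Defensive.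

Lemma card_cnt n (P : pred nat) : #|[set v : 'I_n | P v]| = count P (iota 0 n).
Proof.
rewrite cardsE cardE /enum_mem size_filter -val_enum_ord count_map -enumT.
by apply: eq_count => v.
Qed.

Lemma cnt_range n a b : b <= n -> count (fun v => a <= v < b) (iota 0 n) = b - a.
Proof.
elim: n b => [|n IH] b hb.
  by rewrite leqn0 in hb; rewrite (eqP hb).
rewrite -addn1 iotaD count_cat /= add0n addn0.
case: (ltnP b n.+1) => hb'.
  by rewrite IH ?andbF ?addn0; lia.
have eb : b = n.+1 by lia.
subst b. rewrite andbT.
have -> : count (fun v : nat => a <= v < n.+1) (iota 0 n) = count (fun v : nat => a <= v < n) (iota 0 n).
  apply: eq_in_count => v; rewrite mem_iota => /andP [_ hv].
  rewrite add0n in hv; have -> : v < n.+1 by lia. by rewrite hv.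
rewrite IH //. case: (leqP a n) => ha /=; lia.
Qed.

Lemma card_range n a b : b <= n -> #|[set v : 'I_n | a <= v < b]| = b - a.
Proof. move=> hb; rewrite (card_cnt n (fun v => a <= v < b)). exact: cnt_range. Qed.

Lemma noloop n (D : digraph n) u : acyclic D -> (u,u) \notin D.
Proof.
move=> /forallP /(_ u) /forallP /(_ u) /implyP H; apply/negP => Huu.
by move: (H Huu); rewrite connect0.
Qed.

Lemma no2cyc n (D : digraph n) u v : acyclic D -> (u,v) \in D -> (v,u) \in D -> False.
Proof.
move=> /forallP /(_ u) /forallP /(_ v) /implyP H Huv Hvu.
by move: (H Huv); rewrite (connect1 (e := adj D) Hvu).
Qed.

Lemma conn_step (T : finType) (e : rel T) a b : connect e a b -> a != b -> exists c, e a c.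
Proof.
move=> /connectP [p]; case: p => [|c p] /=.
  by move=> _ ->; rewrite eqxx.
by move=> /andP [H _] _ _; exists c.
Qed.

Lemma acyclic_sub n (D D' : digraph n) : D' \subset D -> acyclic D -> acyclic D'.
Proof.
move=> hs /forallP Hac; apply/forallP => a; apply/forallP => b; apply/implyP => Hab.
have := forallP (Hac a) b; rewrite /adj (subsetP hs _ Hab) /= => H.
apply: contra H; apply: connect_sub => u v Huv; apply: connect1.
exact: (subsetP hs _ Huv).
Qed.

Lemma min_edge n x y (D : digraph n) u v : minimal_tdg x y D -> (u,v) \in D ->
 (forall v', (u,v') \in D -> v' = v) \/ (forall u', (u',v) \in D -> u' = u).
Proof.
move=> [[Hac [Hi Ht]] Hmin] Huv.
case: (boolP [forall v', ((u,v') \in D) ==> (v' == v)]) => [/forallP H1|/forallPn [v' Hv']].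
  by left => v' /(implyP (H1 v')) /eqP.
case: (boolP [forall u', ((u',v) \in D) ==> (u' == u)]) => [/forallP H2|/forallPn [u' Hu']].
  by right => u' /(implyP (H2 u')) /eqP.
exfalso; apply: (Hmin _ Huv).
rewrite negb_imply in Hv'; rewrite negb_imply in Hu'.
move/andP: Hv' => [Hv'D Hv'ne]; move/andP: Hu' => [Hu'D Hu'ne].
split; [|split].
- by apply: acyclic_sub Hac; apply: subD1set.
- rewrite -Hi /n_initial; apply: eq_card => w; rewrite !inE /initial.
  apply/forallP/forallP => H a.
  + apply/negP => Haw.
    case: (eqVneq (a,w) (u,v)) => [E|hne].
      case: E => Ea Ew; subst a w.
      by have := H u'; rewrite /adj !inE xpair_eqE (negbTE Hu'ne) Hu'D.
    by have := H a; rewrite /adj !inE hne; rewrite /adj in Haw; rewrite Haw.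
  + by have := H a; rewrite /adj !inE; apply: contra => /andP [].
- rewrite -Ht /n_terminal; apply: eq_card => w; rewrite !inE /terminal.
  apply/forallP/forallP => H a.
  + apply/negP => Haw.
    case: (eqVneq (w,a) (u,v)) => [E|hne].
      case: E => Ea Ew; subst a w.
      by have := H v'; rewrite /adj !inE xpair_eqE (negbTE Hv'ne) Hv'D andbF.
    by have := H a; rewrite /adj !inE hne; rewrite /adj in Haw; rewrite Haw.
  + by have := H a; rewrite /adj !inE; apply: contra => /andP [].
Qed.

Lemma cardD1_sub (T : finType) (A : {set T}) a : a \in A -> #|A :\ a| = #|A| - 1.
Proof. move=> ha; have := cardsD1 a A; rewrite ha /=; lia. Qed.


Lemma card_minus2 (T: finType) (A B : {set T}) a b : B \subset A -> a \in A -> b \in A -> a != b ->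
  a \notin B -> b \notin B -> #|B| + 2 <= #|A|.
Proof.
move=> hs ha hb hab hna hnb.
have Hs2 : B \subset A :\ a :\ b.
  apply/subsetP => p hp; rewrite !in_setD1 (subsetP hs _ hp) andbT.
  by apply/andP; split; apply/negP => /eqP E; subst p; [move/negP: hnb | move/negP: hna].
have := subset_leq_card Hs2.
have c1 := cardsD1 a A; have c2 := cardsD1 b (A :\ a).
rewrite ha in c1; rewrite !in_setD1 hb eq_sym hab /= in c2.
rewrite /= in c1. lia.
Qed.

Lemma target_card n (I T : {set 'I_n}) :
  #|[set p : 'I_n * bool | if p.2 then p.1 \notin T else p.1 \notin I]| = (n - #|T|) + (n - #|I|).
Proof.
have inj1 : injective (fun u : 'I_n => (u,true)) by move=> a b [].
have inj2 : injective (fun u : 'I_n => (u,false)) by move=> a b [].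
have -> : [set p : 'I_n * bool | if p.2 then p.1 \notin T else p.1 \notin I] =
   ((fun u => (u,true)) @: ~: T) :|: ((fun u => (u,false)) @: ~: I).
  apply/setP => [[u b]]; rewrite !inE /=; case: b.
  - rewrite (mem_imset _ _ inj1) inE.
    have -> : ((u,true) \in (fun u => (u,false)) @: ~: I) = false.
      by apply/negbTE/negP => /imsetP [w _ E].
    by rewrite orbF.
  - rewrite (mem_imset _ _ inj2) inE.
    have -> : ((u,false) \in (fun u => (u,true)) @: ~: T) = false.
      by apply/negbTE/negP => /imsetP [w _ E].
    by [].
rewrite cardsU !card_imset //.
have -> : ((fun u => (u,true)) @: ~: T) :&: ((fun u => (u,false)) @: ~: I) = set0.
  apply/setP => [[u b]]; rewrite !inE; apply/negbTE/negP => /andP [/imsetP [w _ E1] /imsetP [w' _ E2]].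
  by rewrite E1 in E2.
rewrite cards0 subn0.
have h1 := cardsC T; have h2 := cardsC I; rewrite card_ord in h1 h2. lia.
Qed.

Lemma ub n x y (D : digraph n) : 1 <= x -> 1 <= y -> x + y < n -> minimal_tdg x y D ->
  #|D| <= 2 * n - x - y - 2.
Proof.
move=> hx hy hn Hm. have Hm' := Hm; case: Hm => [[Hac [Hi Ht]] _].
pose Iset := [set v | initial D v]; pose Tset := [set v | terminal D v].
pose uo (u : 'I_n) := [forall v1, [forall v2, ((u,v1) \in D) ==> ((u,v2) \in D) ==> (v1 == v2)]].
pose f (e : 'I_n * 'I_n) := if uo e.1 then (e.1, true) else (e.2, false).
pose target := [set p : 'I_n * bool | if p.2 then p.1 \notin Tset else p.1 \notin Iset].
have nonterm : forall u v, (u,v) \in D -> ~~ terminal D u.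
  by move=> u v huv; apply/forallPn; exists v; rewrite negbK.
have noninit : forall u v, (u,v) \in D -> ~~ initial D v.
  by move=> u v huv; apply/forallPn; exists u; rewrite negbK.
have Hinj : {in D &, injective f}.
  move=> [u v] [u' v'] He He'; rewrite /f /=.
  case: (boolP (uo u)) => hu; case: (boolP (uo u')) => hu' //.
  - case=> E; subst u'.
    by move: hu => /forallP /(_ v) /forallP /(_ v'); rewrite He He' /= => /eqP ->.
  - case=> E; subst v'.
    case: (min_edge Hm' He) => [H|H].
      exfalso; move/negP: hu; apply; apply/forallP => v1; apply/forallP => v2.
      by apply/implyP => /H -> ; apply/implyP => /H ->.
    by rewrite (H _ He').
have Hsub : f @: D \subset target.
  apply/subsetP => p /imsetP [[u v] He ->]; rewrite /f /= !inE.
  by case: (uo u) => /=; [exact: (nonterm _ _ He) | exact: (noninit _ _ He)].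
have Htc : #|target| = (n - y) + (n - x) by rewrite target_card; rewrite /n_initial /n_terminal in Hi Ht; rewrite Hi Ht.
pose W := [set u | ~~ uo u].
have miss_true : forall u, u \in W -> (u,true) \in target /\ (u,true) \notin f @: D.
  move=> u; rewrite inE => hu; split.
    move/forallPn: hu => [v1 /forallPn [v2]]; rewrite negb_imply => /andP [h1 _].
    by rewrite !inE /=; exact: (nonterm _ _ h1).
  apply/negP => /imsetP [[a b] He]; rewrite /f /=; case: ifP => ha // [] E.
  by subst a; rewrite ha in hu.
have hit_false : forall v, (v,false) \in f @: D -> exists2 w, w \in W & (w,v) \in D.
  move=> v /imsetP [[a b] He]; rewrite /f /=; case: ifP => ha // [] E.
  by subst b; exists a => //; rewrite inE ha.
have uoP : forall u v, (u,v) \in D -> (forall v', (u,v') \in D -> v' = v) -> uo u.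
  move=> u v _ H; apply/forallP => v1; apply/forallP => v2.
  by apply/implyP => /H -> ; apply/implyP => /H ->.
have key : exists a b, [/\ a \in target, b \in target, a != b, a \notin f @: D & b \notin f @: D].
  case: (ltnP 1 #|W|) => hW.
  - move/card_gt1P: hW => [w1 [w2 [h1 h2 h12]]].
    have [t1 n1] := miss_true _ h1; have [t2 n2] := miss_true _ h2.
    by exists (w1,true), (w2,true); split => //; rewrite xpair_eqE (negbTE h12).
  case: (posnP #|W|) => hW0.
  - have W0 := cards0_eq hW0.
    have : 1 < #|~: [set v | initial D v]|.
      have := cardsC [set v | initial D v]; rewrite card_ord; rewrite /n_initial in Hi; rewrite Hi; lia.
    move/card_gt1P => [v1 [v2 [h1 h2 h12]]].
    rewrite !inE in h1 h2.
    exists (v1,false), (v2,false); split.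
    + by rewrite !inE /=.
    + by rewrite !inE /=.
    + by rewrite xpair_eqE (negbTE h12).
    + by apply/negP => /hit_false [w]; rewrite W0 inE.
    + by apply/negP => /hit_false [w]; rewrite W0 inE.
  have hW1 : #|W| == 1 by apply/eqP; lia.
  move/cards1P: hW1 => [w Ww].
  have wW : w \in W by rewrite Ww set11.
  have [tw nw] := miss_true _ wW.
  have : ~~ ([set: 'I_n] \subset [set v | initial D v] :|: [set v | terminal D v]).
    apply/negP => hs; have := subset_leq_card hs; rewrite cardsT card_ord cardsU.
    rewrite /n_initial in Hi; rewrite /n_terminal in Ht; rewrite Hi Ht; lia.
  move/subsetPn => [m _]; rewrite !inE negb_or => /andP [mi mt].
  move/forallPn: mt => [v]; rewrite negbK /adj => hmv.
  case: (eqVneq m w) => [E|hmw].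
  - subst m. exists (w,true), (w,false); split => //.
    + by rewrite !inE /=.
    + by rewrite xpair_eqE andbF.
    + apply/negP => /hit_false [w']; rewrite Ww inE => /eqP -> hww.
      by have := noloop w Hac; rewrite hww.
  - exists (w,true), (v,false); split => //.
    + by rewrite !inE /=; exact: (noninit _ _ hmv).
    + by rewrite xpair_eqE andbF.
    + apply/negP => /hit_false [w']; rewrite Ww inE => /eqP -> hwv.
      case: (min_edge Hm' hwv) => [H|H].
        by move: wW; rewrite inE (uoP _ _ hwv H).
      by rewrite (H _ hmv) eqxx in hmw.
case: key => a [b [ha hb hab hna hnb]].
have := card_minus2 Hsub ha hb hab hna hnb.
rewrite (card_in_imset Hinj) Htc. lia.
Qed.


Lemma star n x y (D : digraph n) : 1 <= x -> 1 <= y -> n = x + y ->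
  conn_minimal_tdg x y D -> #|D| = n - 1 /\ (x = 1 \/ y = 1).
Proof.
move=> hx hy hn [Hm Hc]. have Hm' := Hm. case: Hm => [[Hac [Hi Ht]] _].
rewrite /n_initial in Hi; rewrite /n_terminal in Ht.
pose r := fun a b => adj D a b || adj D b a.
have rsym : forall a b, r a b = r b a by move=> a b; rewrite /r orbC.
have hasnb : forall w, exists z, r w z.
  move=> w; have : 0 < #|[set~ w]| by rewrite cardsC1 card_ord; lia.
  move/card_gt0P => [z]; rewrite !inE => hz.
  by apply: (conn_step (Hc w z)); rewrite eq_sym.
have outT : forall u v, (u,v) \in D -> ~~ terminal D u.
  by move=> u v huv; apply/forallPn; exists v; rewrite negbK.
have inI : forall u v, (u,v) \in D -> ~~ initial D v.
  by move=> u v huv; apply/forallPn; exists u; rewrite negbK.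
have notboth : forall w, ~~ (initial D w && terminal D w).
  move=> w; have [z /orP [h|h]] := hasnb w.
  - by rewrite (negbTE (outT _ _ h)) andbF.
  - by rewrite (negbTE (inI _ _ h)).
have either : forall w, initial D w || terminal D w.
  move=> w.
  have E : [set v | initial D v] :|: [set v | terminal D v] == [set: 'I_n].
    rewrite eqEcard subsetT cardsT card_ord cardsU Hi Ht.
    have -> : [set v | initial D v] :&: [set v | terminal D v] = set0.
      by apply/setP => v; rewrite !inE (negbTE (notboth v)).
    by rewrite cards0; lia.
  by have := in_setT w; rewrite -(eqP E) !inE.
have notmid : forall w u v, (u,w) \in D -> (w,v) \in D -> False.
  move=> w u v h1 h2; have := either w.
  by rewrite (negbTE (inI _ _ h1)) (negbTE (outT _ _ h2)).
have leafrel : forall a b, r a b -> (forall z, r a z -> z = b) \/ (forall z, r b z -> z = a).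
  move=> a b /orP [hab|hba].
  - case: (min_edge Hm' hab) => H; [left|right] => z /orP [h|h].
    + exact: H.
    + by case: (notmid _ _ _ h hab).
    + by case: (notmid _ _ _ hab h).
    + exact: H.
  - case: (min_edge Hm' hba) => H; [right|left] => z /orP [h|h].
    + exact: H.
    + by case: (notmid _ _ _ h hba).
    + by case: (notmid _ _ _ hba h).
    + exact: H.
have n0 : 0 < n by lia.
have [c [a [hca leafa]]] : exists c a, r c a /\ (forall z, r a z -> z = c).
  have [c0 h0] := hasnb (Ordinal n0).
  case: (leafrel _ _ h0) => H.
  - by exists c0, (Ordinal n0); rewrite rsym.
  - by exists (Ordinal n0), c0.
have nbleaf : forall w, r c w -> forall z, r w z -> z = c.
  move=> w hcw; case: (leafrel _ _ hcw) => H //.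
  by have E := H a hca; subst a.
have fwd : forall p q, r p q -> (p == c) || r c p -> (q == c) || r c q.
  move=> p q hpq /orP [/eqP E|hcp].
  - by subst p; rewrite hpq orbT.
  - by rewrite (nbleaf _ hcp _ hpq) eqxx.
have allnb : forall w, w != c -> r c w.
  move=> w hw.
  have cl : closed r [pred z | (z == c) || r c z].
    move=> p q hpq; rewrite !inE; apply/idP/idP; first exact: fwd.
    by apply: fwd; rewrite rsym.
  have := closed_connect cl (Hc c w); rewrite !inE eqxx /= (negbTE hw) /=. by move=> <-.
pose g (w : 'I_n) := if adj D c w then (c,w) else (w,c).
pose h (p : 'I_n * 'I_n) := if p.1 == c then p.2 else p.1.
have ginj : {in [set~ c] &, injective g}.
  apply: (can_in_inj (g := h)) => w; rewrite !inE => hw.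
  by rewrite /g /h; case: (adj D c w) => /=; [rewrite eqxx | rewrite (negbTE hw)].
have DE : D = g @: [set~ c].
  apply/setP => [[p q]]; apply/idP/imsetP.
  - move=> hpq; case: (eqVneq p c) => [E|hpc].
    + subst p; exists q.
        rewrite !inE; apply/negP => /eqP E; subst q.
        by move/negP: (noloop c Hac).
      by rewrite /g /adj hpq.
    + have hcp := allnb _ hpc.
      have E : q = c by apply: (nbleaf _ hcp); rewrite /r /adj hpq.
      subst q; exists p; first by rewrite !inE.
      rewrite /g; case: ifP => // hcp'.
      by case: (no2cyc Hac hpq hcp').
  - move=> [w hw ->]; rewrite !inE in hw.
    have := allnb _ hw; rewrite /r /g.
    by case: ifP => // _ /=.
split.
  by rewrite DE (card_in_imset ginj) cardsC1 card_ord; lia.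
case: (boolP (initial D c)) => hci.
- left; rewrite -Hi.
  have -> : [set v | initial D v] = [set c].
    apply/setP => w; rewrite !inE; apply/idP/eqP => [hw|->//].
    case: (eqVneq w c) => // hwc; exfalso.
    move: (allnb _ hwc) => /orP [h1|h1].
    + by move: hw; rewrite (negbTE (inI _ _ h1)).
    + by move: hci; rewrite (negbTE (inI _ _ h1)).
  by rewrite cards1.
- right; rewrite -Ht.
  have hct : terminal D c by move: (either c); rewrite (negbTE hci).
  have -> : [set v | terminal D v] = [set c].
    apply/setP => w; rewrite !inE; apply/idP/eqP => [hw|->//].
    case: (eqVneq w c) => // hwc; exfalso.
    move: (allnb _ hwc) => /orP [h1|h1].
    + by move: hct; rewrite (negbTE (outT _ _ h1)).
    + by move: hw; rewrite (negbTE (outT _ _ h1)).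
  by rewrite cards1.
Qed.


Lemma conn_mono n (e : rel 'I_n) : (forall u v, e u v -> u < v) ->
  forall a b, connect e a b -> a <= b.
Proof.
move=> H a b /connectP [p hp ->]; elim: p a hp => [|c p IH] a //=.
move/andP=> [hac hp]; exact: leq_trans (ltnW (H _ _ hac)) (IH _ hp).
Qed.

Lemma init_grow n (D : digraph n) e w : initial (D :\ e) w -> ~~ initial D w ->
  n_initial D < n_initial (D :\ e).
Proof.
move=> h1 h2; apply: proper_card; apply/properP; split.
  apply/subsetP => v; rewrite !inE => /forallP H; apply/forallP => a.
  by have := H a; rewrite /adj !inE; apply: contra => /andP [].
by exists w; rewrite !inE.
Qed.

Lemma term_grow n (D : digraph n) e w : terminal (D :\ e) w -> ~~ terminal D w ->
  n_terminal D < n_terminal (D :\ e).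
Proof.
move=> h1 h2; apply: proper_card; apply/properP; split.
  apply/subsetP => v; rewrite !inE => /forallP H; apply/forallP => a.
  by have := H a; rewrite /adj !inE; apply: contra => /andP [].
by exists w; rewrite !inE.
Qed.

Lemma construct x y n : 1 <= x -> 1 <= y -> x + y < n ->
  exists D : digraph n, conn_minimal_tdg x y D /\ n_edges D = 2 * n - x - y - 2.
Proof.
move=> hx hy hn.
have n0 : 0 < n by lia.
have ht : n - y < n by lia.
have hx' : x < n by lia.
have h1 : 1 < n by lia.
pose o0 := Ordinal n0; pose t0 := Ordinal ht; pose mx := Ordinal hx'; pose o1 := Ordinal h1.
pose SA := [set v : 'I_n | x <= v < n] :\ t0.
pose SB := [set u : 'I_n | 0 < u < n - y].
pose D : digraph n := ((fun v => (o0, v)) @: SA) :|: ((fun u => (u, t0)) @: SB).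
have m1 : forall u v, ((u,v) \in (fun v => (o0,v)) @: SA) = (u == o0) && (v \in SA).
  move=> u v; apply/imsetP/andP => [[w hw [-> ->]]|[/eqP -> hv]]; first by rewrite eqxx.
  by exists v.
have m2 : forall u v, ((u,v) \in (fun u => (u,t0)) @: SB) = (v == t0) && (u \in SB).
  move=> u v; apply/imsetP/andP => [[w hw [-> ->]]|[/eqP -> hv]]; first by rewrite eqxx.
  by exists u.
have inD : forall u v, ((u,v) \in D) =
   ((u == 0 :> nat) && (v != n - y :> nat) && (x <= v)) || ((v == n - y :> nat) && (0 < u) && (u < n - y)).
  move=> u v; rewrite /D in_setU m1 m2 !inE -!val_eqE /= ltn_ord andbT.
  by rewrite !andbA.
have mono : forall u v, adj D u v -> u < v.
  by move=> u v; rewrite /adj inD; lia.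
have Hac : acyclic D.
  apply/forallP => a; apply/forallP => b; apply/implyP => hab.
  apply/negP => /(conn_mono mono) hba; have := mono _ _ hab; lia.
have Iset : [set v | initial D v] = [set v : 'I_n | 0 <= v < x].
  apply/setP => v; rewrite !inE; apply/forallP/idP => [H|hv u].
  - case: (ltnP v x) => // hv; exfalso.
    case: (eqVneq (nat_of_ord v) (n - y)) => e.
    + by have := H o1; rewrite /adj inD /= e; lia.
    + by have := H o0; rewrite /adj inD /=; lia.
  - rewrite /adj inD; lia.
have Tset : [set v | terminal D v] = [set v : 'I_n | n - y <= v < n].
  apply/setP => v; rewrite !inE ltn_ord andbT; apply/forallP/idP => [H|hv u].
  - case: (ltnP v (n - y)) => // hv; exfalso.
    case: (posnP (nat_of_ord v)) => e.
    + by have := H mx; rewrite /adj inD /= e; lia.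
    + by have := H t0; rewrite /adj inD /=; lia.
  - rewrite /adj inD; lia.
have Hi : n_initial D = x by rewrite /n_initial Iset card_range; lia.
have Ht : n_terminal D = y by rewrite /n_terminal Tset card_range //; lia.
exists D; split; last first.
  rewrite /n_edges /D cardsU !card_imset; try by move=> a b [].
  have -> : ((fun v => (o0,v)) @: SA) :&: ((fun u => (u,t0)) @: SB) = set0.
    apply/setP => [[a b]]; rewrite in_setI m1 m2 in_set0 !inE -!val_eqE /=; lia.
  have c2 := @card_range n 1 (n - y).
  rewrite /SB c2; last lia.
  rewrite /SA cards0 cardD1_sub; last by rewrite !inE /=; lia.
  rewrite card_range //; lia.
split; first split.
- by [].
- move=> [u v] he [_ [hi2 ht2]].
  move: (he); rewrite inD => /orP [/andP [/andP [hu hv] hxv] | /andP [/andP [hv hu0] hu]].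
  + have : n_initial D < n_initial (D :\ (u,v)).
      apply: (init_grow (w := v)).
      * apply/forallP => a; rewrite /adj in_setD1 inD xpair_eqE -!val_eqE /=; lia.
      * by apply/forallPn; exists u; rewrite negbK.
    rewrite hi2 Hi; lia.
  + have : n_terminal D < n_terminal (D :\ (u,v)).
      apply: (term_grow (w := u)).
      * apply/forallP => a; rewrite /adj in_setD1 inD xpair_eqE -!val_eqE /=; lia.
      * by apply/forallPn; exists v; rewrite negbK.
    rewrite ht2 Ht; lia.
- pose r := fun a b => adj D a b || adj D b a.
  have symr : symmetric r by move=> a b; rewrite /r orbC.
  have e0t : connect r o0 t0.
    apply: (connect_trans (y := mx)); apply: connect1; rewrite /r /adj !inD /=; lia.
  have conn0 : forall w, connect r o0 w.
    move=> w; case: (eqVneq (nat_of_ord w) 0) => e0.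
      by have -> : w = o0 by apply: val_inj.
    case: (eqVneq (nat_of_ord w) (n - y)) => e.
      by have -> : w = t0 by apply: val_inj.
    case: (ltnP w (n - y)) => hw.
    + apply: (connect_trans e0t); apply: connect1; rewrite /r /adj !inD /=; lia.
    + apply: connect1; rewrite /r /adj !inD /=; lia.
  move=> u v; apply: (connect_trans (y := o0)); last exact: conn0.
  by rewrite (sym_connect_sym symr); exact: conn0.
Qed.

Theorem mainTheorem2 (x y n : nat) (hx : 1 <= x) (hy : 1 <= y) :
  (n = x + y ->
     (exists D : digraph n, conn_minimal_tdg x y D) ->
     minn x y = 1 /\ is_max_edges n x y (maxn x y)) /\
  (x + y < n -> is_max_edges n x y (2 * n - x - y - 2)).
Proof.
split.
- move=> hn [D0 HD0]; have [c0 m0] := star hx hy hn HD0.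
  split; first by case: m0 => ->; lia.
  split.
    exists D0; split => //; rewrite /n_edges c0; case: m0; lia.
  move=> D HD; have [c _] := star hx hy hn HD; rewrite /n_edges c; case: m0; lia.
- move=> hn; split; first exact: construct.
  by move=> D [HD _]; exact: ub hx hy hn HD.
Qed.
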